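(* Let $(V,g)$ be a Euclidean vector space of dimension $4$. Let $R$ be an algebraic curvature tensor on $V$ and $\mathring{R}$ its induced curvature operator of the second kind. (1) If $\mathring{R}\in\mathcal{C}(\alpha,1)$ with $1\le\alpha\le3$, or $\mathring{R}\in\mathcal{C}(\alpha,9\alpha^{-1}-2)$ with $3\le\alpha<9$, then $R$ has nonnegative isotropic curvature. (2) If $\mathring{R}\in\mathring{\mathcal{C}}(\alpha,1)$ with $1\le\alpha\le3$, or $\mathring{R}\in\mathring{\mathcal{C}}(\alpha,9\alpha^{-1}-2)$ with $3\le\alpha<9$, then $R$ has positive isotropic curvature.
   Context: $S^2_0(V)$ is the space of traceless symmetric two-tensors (dimension $N=9$). An algebraic curvature tensor is $R\in S^2(\wedge^2V)$ satisfying the first Bianchi identity. $\mathring{R}=\pi\circ\overline{R}:S^2_0(V)\to S^2_0(V)$ with $\overline{R}(h)_{ij}=\sum_{k,l}R_{iklj}h_{kl}$ and $\pi$ the projection onto traceless tensors. For a symmetric operator with eigenvalues $\lambda_1\le\cdots\le\lambda_N$ and average $\bar\lambda$, write $\lambda_1+\cdots+\lambda_\alpha:=\lambda_1+\cdots+\lambda_{[\alpha]}+(\alpha-[\alpha])\lambda_{[\alpha]+1}$; $\mathcal{C}(\alpha,\theta)$ ($\theta>-1$) is the cone of symmetric operators on $S^2_0(V)$ with $\alpha^{-1}(\lambda_1+\cdots+\lambda_\alpha)\ge-\theta\bar\lambda$, and $\mathring{\mathcal{C}}(\alpha,\theta)$ its interior. $R$ has nonnegative (resp. positive) isotropic curvature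 if $R_{1313}+R_{1414}+R_{2323}+R_{2424}-2R_{1234}\ge0$ (resp. $>0$) for every orthonormal four-frame $\{e_1,e_2,e_3,e_4\}$, where $R_{ijkl}=R(e_i,e_j,e_k,e_l)$. *)

(* Defs.v *)
From HB Require Import structures.
From mathcomp Require Import all_boot all_order all_algebra.
From mathcomp Require Import reals.
Set Implicit Arguments. Unset Strict Implicit. Unset Printing Implicit Defensive.
Import Order.TTheory GRing.Theory Num.Theory.
Local Open Scope ring_scope.

Section Defs.
Variable R : realType.

(* V = R^4 with its standard inner product; a 4-tensor is given by its
   components R_{ijkl} in the standard orthonormal basis (indices 0..3). *)
Definition tensor4 := 'I_4 -> 'I_4 -> 'I_4 -> 'I_4 -> R.

Definition is_alg_curv (Rm : tensor4) : Prop :=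
  [/\ forall i j k l, Rm i j k l = - Rm j i k l,
      forall i j k l, Rm i j k l = - Rm i j l k,
      forall i j k l, Rm i j k l = Rm k l i j
    & forall i j k l, Rm i j k l + Rm j k i l + Rm k i j l = 0].

Definition Reval (Rm : tensor4) (x y z w : 'I_4 -> R) : R :=
  \sum_a \sum_b \sum_c \sum_d Rm a b c d * x a * y b * z c * w d.

Definition vdot (x y : 'I_4 -> R) : R := \sum_k x k * y k.

(* orthonormal four-frame {e_1,...,e_4} = {e 0, ..., e 3} *)
Definition orthonormal_frame (e : 'I_4 -> 'I_4 -> R) : Prop :=
  forall i j, vdot (e i) (e j) = (i == j)%:R.

Definition iso_curv (Rm : tensor4) (e : 'I_4 -> 'I_4 -> R) : R :=
  let e1 := e (inord 0) in let e2 := e (inord 1) in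
  let e3 := e (inord 2) in let e4 := e (inord 3) in
  Reval Rm e1 e3 e1 e3 + Reval Rm e1 e4 e1 e4 + Reval Rm e2 e3 e2 e3
  + Reval Rm e2 e4 e2 e4 - 2 * Reval Rm e1 e2 e3 e4.

Definition nonneg_iso_curv (Rm : tensor4) : Prop :=
  forall e, orthonormal_frame e -> 0 <= iso_curv Rm e.

Definition pos_iso_curv (Rm : tensor4) : Prop :=
  forall e, orthonormal_frame e -> 0 < iso_curv Rm e.

(* symmetric two-tensors on V are 4x4 matrices; induced inner product *)
Definition mdot (A B : 'M[R]_4) : R := \sum_i \sum_j A i j * B i j.

Definition Rbar (Rm : tensor4) (h : 'M[R]_4) : 'M[R]_4 :=
  \matrix_(i, j) \sum_k \sum_l Rm i k l j * h k l.

Definition proj0 (h : 'M[R]_4) : 'M[R]_4 := h - (\tr h / 4%:R) *: 1%:M.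

Definition is_onb_S20 (b : 'I_9 -> 'M[R]_4) : Prop :=
  [/\ forall a, (b a)^T = b a,
      forall a, \tr (b a) = 0
    & forall a c, mdot (b a) (b c) = (a == c)%:R].

(* matrix of the curvature operator of the second kind R° = π ∘ \overline{R}
   on S^2_0(V) in the orthonormal basis b *)
Definition curv2_mx (Rm : tensor4) (b : 'I_9 -> 'M[R]_4) : 'M[R]_9 :=
  \matrix_(a, c) mdot (b a) (proj0 (Rbar Rm (b c))).

(* λ_1 + ... + λ_α := λ_1+...+λ_[α] + (α-[α]) λ_{[α]+1}
   (lam is the 0-indexed nondecreasing list of eigenvalues) *)
Definition psum (lam : seq R) (alpha : R) : R :=
  let k := `|Num.floor alpha|%N in
  \sum_(i < k) lam`_i + (alpha - k%:R) * lam`_k.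

(* eigenvalues λ_1 <= ... <= λ_9 of a (symmetric) operator given by its
   matrix A in an orthonormal basis: the roots of its characteristic polynomial
   with multiplicity, sorted. *)
Definition eigenvalues_of (A : 'M[R]_9) (lam : seq R) : Prop :=
  [/\ size lam = 9%N, sorted <=%R lam
    & char_poly A = \prod_(x <- lam) ('X - x%:P)].

Definition in_cone (A : 'M[R]_9) (alpha theta : R) : Prop :=
  exists lam, eigenvalues_of A lam /\
    alpha^-1 * psum lam alpha >= - theta * ((\sum_(x <- lam) x) / 9%:R).

(* interior of C(α,θ) in the space of symmetric operators on S^2_0(V)
   (identified, via the orthonormal basis, with symmetric 9x9 matrices) *)
Definition in_cone_interior (A : 'M[R]_9) (alpha theta : R) : Prop :=
  exists2 eps : R, 0 < eps &
    forall B : 'M[R]_9, B^T = B ->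
      (forall a c, `|B a c - A a c| < eps) -> in_cone B alpha theta.

End Defs.

(* Main.v *)
Require Import Defs.
From HB Require Import structures.
From mathcomp Require Import all_boot all_order all_algebra.
From mathcomp Require Import reals.
From mathcomp Require Import complex spectral sesquilinear.
From mathcomp Require Import ring lra.
Set Implicit Arguments. Unset Strict Implicit. Unset Printing Implicit Defensive.
Import Order.TTheory GRing.Theory Num.Theory.
Local Open Scope ring_scope.
Section P1.
Variable R : realType.

Lemma sorted_nth_le (lam : seq R) i j : sorted <=%R lam -> (i <= j)%N ->
  (j < size lam)%N -> lam`_i <= lam`_j.
Proof.
move=> so hij hj.
apply: (@sorted_leq_nth R <=%R le_trans lexx 0 lam so) => //.
by rewrite inE; exact: leq_ltn_trans hij hj.
Qed.

Lemma psum_le (lam : seq R) (d c : 'I_9 -> R) (al : R) :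
  size lam = 9%N -> sorted <=%R lam ->
  perm_eq lam [seq d k | k <- enum 'I_9] ->
  (forall k, 0 <= c k <= 1) -> \sum_k c k = al -> 1 <= al -> al < 9 ->
  psum lam al <= \sum_k c k * d k.
Proof.
move=> sz so pe hc sc a1 a9.
rewrite /psum.
set k0 := `|Num.floor al|%N.
have fl0 : 0 <= Num.floor al by rewrite floor_ge_int /=; lra.
have k0E : (k0%:R : R) = (Num.floor al)%:~R.
  by rewrite /k0 -[in RHS](gez0_abs fl0) pmulrn.
have k0le : (k0%:R : R) <= al by rewrite k0E floor_le.
have k09 : (k0 < 9)%N.
  have : Num.floor al < 9 by rewrite floor_lt_int.
  by rewrite -(gez0_abs fl0) /k0 => /=; case: (Num.floor al) => //= n; rewrite ltz_nat.
set t := lam`_k0.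
pose g x := if 0 <= x - t then 0 else x - t.
have step1 : \sum_k c k * d k >= \sum_k g (d k) + al * t.
  have -> : \sum_k c k * d k = \sum_k c k * (d k - t) + al * t.
    rewrite -sc mulr_suml -big_split /=; apply: eq_bigr => k _; ring.
  rewrite lerD2r; apply: ler_sum => k _; rewrite /g /=.
  have /andP[h0 h1] := hc k; case: (lerP 0 (d k - t)) => h.
  - by rewrite mulr_ge0.
    by nra.
have step2 : \sum_k g (d k) = \sum_(i < 9) g lam`_i.
  have -> : \sum_(i < 9) g lam`_i = \sum_(x <- lam) g x.
    by rewrite [RHS](big_nth 0) sz big_mkord.
  rewrite (perm_big _ pe) /= big_map big_enum /=.
  by apply: eq_bigl => k; rewrite inE.
have step3 : \sum_(i < 9) g lam`_i = \sum_(i < k0) (lam`_i - t).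
  rewrite -(subnKC (ltnW k09)) big_split_ord /=.
  rewrite [X in _ + X]big1 ?addr0; last first.
    move=> i _; rewrite /g subr_ge0 /t ifT //.
    apply: sorted_nth_le; rewrite ?sz ?leq_addr //.
    by rewrite -[X in (_ < X)%N](subnKC (ltnW k09)) ltn_add2l.
  apply: eq_bigr => i _; rewrite /g.
  have hi : lam`_i <= t.
    apply: sorted_nth_le; rewrite ?sz //.
      exact: ltnW.
  case: ifP => // h; apply/eqP; rewrite eq_le; apply/andP; split; lra.
have step4 : \sum_(i < k0) (lam`_i - t) = \sum_(i < k0) lam`_i - k0%:R * t.
  by rewrite sumrB sumr_const card_ord mulr_natl.
rewrite step2 step3 step4 in step1.
lra.
Qed.
End P1.


Lemma char_poly_conj (F : fieldType) n (P D : 'M[F]_n) : P \in unitmx ->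
  char_poly (invmx P *m D *m P) = char_poly D.
Proof.
move=> Pu.
pose Pi := map_mx polyC (invmx P); pose Pp := map_mx polyC P.
have PiPp : Pi *m Pp = 1%:M by rewrite -map_mxM mulVmx // map_mx1.
have E : char_poly_mx (invmx P *m D *m P) = Pi *m char_poly_mx D *m Pp.
  rewrite /char_poly_mx !map_mxM mulmxBr mulmxBl -/Pi -/Pp.
  by rewrite mul_mx_scalar -scalemxAl PiPp -mulmxA scalemx1.
rewrite /char_poly E !det_mulmx mulrC mulrA -det_mulmx.
by rewrite (mulmx1C PiPp) det1 mul1r.
Qed.



Section P2.
Local Open Scope sesquilinear_scope.
Variable R : realType.
Local Notation f := (real_complex R).

Lemma KF (A M : 'M[R]_9) (lam : seq R) (w : 'I_9 -> R) (al : R) :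
  A^T = A -> eigenvalues_of A lam -> M *m M^T = 1%:M ->
  (forall i, 0 <= w i <= 1) -> \sum_i w i = al -> 1 <= al -> al < 9 ->
  psum lam al <= \sum_i w i * (M *m A *m M^T) i i /\ \sum_(x <- lam) x = \tr A.
Proof.
move=> AT [sz so cp] MMT hw sw a1 a9.
have realC : forall x : R, f x \is Num.real by move=> x; apply/complex_realP; exists x.
have conjf : forall x : R, (f x)^* = f x by move=> x; apply/CrealP.
set AC := map_mx f A; set MC := map_mx f M.
have ACreal : AC \is a realmx by apply/mxOverP => i j; rewrite mxE realC.
have ACsym : AC \is symmetricmx.
  by apply/is_hermitianmxP; rewrite expr0 scale1r map_mx_id // map_trmx AT.
have ACn : AC \is normalmx := symmetric_normalmx ACsym ACreal.
have ACh : AC \is hermsymmx := realsym_hermsym ACsym ACreal.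
set P := spectralmx AC; set dd := spectral_diag AC.
have Pu : P \is unitarymx := spectral_unitarymx AC.
have AE : AC = invmx P *m diag_mx dd *m P by apply/orthomx_spectralP.
have ddr : dd \is a realmx := hermitian_spectral_diag_real ACh.
pose dr k := complex.Re (dd 0 k).
have ddE : forall k, dd 0 k = f (dr k).
  by move=> k; rewrite /dr RRe_real //; exact: (mxOverP ddr 0 k).
have pe : perm_eq lam [seq dr k | k <- enum 'I_9].
  have : perm_eq [seq f x | x <- lam] [seq dd 0 k | k <- enum 'I_9].
    apply: prod_XsubC_eq.
    rewrite big_map [X in _ = X]big_map big_enum /=.
    have -> : \prod_(j <- lam) ('X - (f j)%:P) = map_poly f (char_poly A).
      rewrite cp rmorph_prod; by apply: eq_bigr => x _; rewrite /= map_polyXsubC.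
    rewrite map_char_poly -/AC AE char_poly_conj ?unitarymx_unit //.
    rewrite char_poly_trig ?diag_mx_is_trig //.
    by apply: eq_bigr => k _; rewrite mxE eqxx mulr1n.
  move/(perm_map (@complex.Re R)); rewrite -!map_comp.
  have -> : [seq (@complex.Re R \o f) x | x <- lam] = lam.
    by rewrite (@eq_map _ _ _ id) ?map_id.
  by [].
have trE : \sum_(x <- lam) x = \tr A.
  apply: complexI; rewrite (perm_big _ pe) big_map big_enum /=.
  rewrite rmorph_sum -trace_map_mx -/AC AE mxtrace_mulC mulmxA mulmxV ?unitarymx_unit //.
  by rewrite mul1mx mxtrace_diag; apply: eq_bigr => k _; rewrite ddE.
split=> //.
have MCt : MC^t* = MC^T.
  by apply/matrixP => i j; rewrite !mxE conjf.
have MCu : MC \is unitarymx.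
  by apply/unitarymxP; rewrite MCt map_trmx -map_mxM MMT map_mx1.
have MCTu : MC^T \is unitarymx by rewrite trmx_unitary.
set V := P *m MC^T.
have Vu : V \is unitarymx := mul_unitarymx Pu MCTu.
have VTu : V^t* \is unitarymx by rewrite trmxC_unitary.
have Vt : MC *m P^t* = V^t*.
  have MCt' : (MC^T)^t* = MC by apply/matrixP => i j; rewrite !mxE conjf.
  by rewrite /V trmx_mul map_mxM MCt'.
have diagE : forall i, (MC *m AC *m MC^T) i i = \sum_k (V k i)^* * V k i * dd 0 k.
  move=> i; rewrite AE invmx_unitary // !mulmxA Vt -!mulmxA -/V mul_diag_mx.
  rewrite mxE; apply: eq_bigr => k _; rewrite !mxE; ring.
clearbody V.
pose nr k i := complex.Re ((V k i)^* * V k i).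
have nE : forall k i, (V k i)^* * V k i = f (nr k i).
  move=> k i; rewrite /nr RRe_real //; apply: ger0_real.
  by rewrite mulrC mul_conjC_ge0.
have nge0 : forall k i, 0 <= nr k i.
  by move=> k i; have := mul_conjC_ge0 (V k i); rewrite mulrC nE ler0c.
have rowsum : forall k, \sum_i nr k i = 1.
  move=> k; apply: complexI; rewrite rmorph_sum rmorph1.
  have /unitarymxP/matrixP/(_ k k) := Vu; rewrite !mxE eqxx mulr1n => <-.
  by apply: eq_bigr => i _; rewrite !mxE mulrC nE.
have colsum : forall i, \sum_k nr k i = 1.
  move=> i; apply: complexI; rewrite rmorph_sum rmorph1.
  have /unitarymxP/matrixP/(_ i i) := VTu; rewrite trmxCK !mxE eqxx mulr1n => <-.
  by apply: eq_bigr => k _; rewrite !mxE nE.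
have entE : forall i, (M *m A *m M^T) i i = \sum_k nr k i * dr k.
  move=> i; apply: complexI.
  have -> : f ((M *m A *m M^T) i i) = (MC *m AC *m MC^T) i i.
    by rewrite /MC /AC map_trmx -!map_mxM [RHS]mxE.
  rewrite diagE rmorph_sum; apply: eq_bigr => k _.
  by rewrite nE ddE rmorphM.
pose c k := \sum_i w i * nr k i.
have hc : forall k, 0 <= c k <= 1.
  move=> k; apply/andP; split.
    by apply: sumr_ge0 => i _; have /andP[? ?] := hw i; rewrite mulr_ge0.
  rewrite -(rowsum k); apply: ler_sum => i _; have /andP[? ?] := hw i.
  by rewrite ler_piMl.
have sc : \sum_k c k = al.
  rewrite /c exchange_big /= -sw; apply: eq_bigr => i _.
  by rewrite -mulr_sumr colsum mulr1.
have := psum_le sz so pe hc sc a1 a9.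
have -> : \sum_k c k * dr k = \sum_i w i * (M *m A *m M^T) i i.
  rewrite /c; under eq_bigr do rewrite mulr_suml.
  rewrite exchange_big /=; apply: eq_bigr => i _.
  by rewrite entE mulr_sumr; apply: eq_bigr => k _; rewrite mulrA.
by [].
Qed.
End P2.

Section G.
Variable R : realType.
Implicit Types (X Y : 'M[R]_4) (Rm : tensor4 R).

Lemma mdotC X Y : mdot X Y = mdot Y X.
Proof. by apply: eq_bigr => i _; apply: eq_bigr => j _; rewrite mulrC. Qed.

Lemma mdotDl X1 X2 Y : mdot (X1 + X2) Y = mdot X1 Y + mdot X2 Y.
Proof.
rewrite /mdot -big_split; apply: eq_bigr => i _.
by rewrite -big_split; apply: eq_bigr => j _; rewrite mxE mulrDl.
Qed.

Lemma mdotZl c X Y : mdot (c *: X) Y = c * mdot X Y.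
Proof.
rewrite /mdot mulr_sumr; apply: eq_bigr => i _.
by rewrite mulr_sumr; apply: eq_bigr => j _; rewrite mxE mulrA.
Qed.

Lemma mdotNl X Y : mdot (- X) Y = - mdot X Y.
Proof. by rewrite -scaleN1r mdotZl mulN1r. Qed.

Lemma mdot_suml (T : finType) (F : T -> 'M[R]_4) Y :
  mdot (\sum_a F a) Y = \sum_a mdot (F a) Y.
Proof.
rewrite /mdot; transitivity (\sum_i \sum_j \sum_a F a i j * Y i j).
  by apply: eq_bigr => i _; apply: eq_bigr => j _; rewrite summxE mulr_suml.
under eq_bigr => i _ do rewrite exchange_big /=.
by rewrite exchange_big.
Qed.

Lemma mdot_sumr (T : finType) (F : T -> 'M[R]_4) Y :
  mdot Y (\sum_a F a) = \sum_a mdot Y (F a).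
Proof. by rewrite mdotC mdot_suml; apply: eq_bigr => a _; rewrite mdotC. Qed.

Lemma mdotZr c X Y : mdot Y (c *: X) = c * mdot Y X.
Proof. by rewrite mdotC mdotZl mdotC. Qed.

Lemma mdotDr X1 X2 Y : mdot Y (X1 + X2) = mdot Y X1 + mdot Y X2.
Proof. by rewrite mdotC mdotDl !(mdotC Y). Qed.

Lemma mdotE X Y : mdot X Y = \tr (X *m Y^T).
Proof.
rewrite /mdot /mxtrace; apply: eq_bigr => i _; rewrite mxE.
by apply: eq_bigr => j _; rewrite mxE.
Qed.

Lemma mdot1 X : mdot X 1%:M = \tr X.
Proof.
rewrite mdotE trmx1 mulmx1 //.
Qed.

Lemma Rbar_sum Rm (T : finType) (F : T -> 'M[R]_4) :
  Rbar Rm (\sum_a F a) = \sum_a Rbar Rm (F a).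
Proof.
apply/matrixP => i j; rewrite summxE !mxE.
transitivity (\sum_k \sum_l \sum_a Rm i k l j * F a k l).
  by apply: eq_bigr => k _; apply: eq_bigr => l _; rewrite summxE mulr_sumr.
under eq_bigr => k _ do rewrite exchange_big /=.
rewrite exchange_big; apply: eq_bigr => a _; by rewrite mxE.
Qed.

Lemma RbarZ Rm c X : Rbar Rm (c *: X) = c *: Rbar Rm X.
Proof.
apply/matrixP => i j; rewrite !mxE mulr_sumr; apply: eq_bigr => k _.
by rewrite mulr_sumr; apply: eq_bigr => l _; rewrite mxE; ring.
Qed.

Lemma RbarD Rm X Y : Rbar Rm (X + Y) = Rbar Rm X + Rbar Rm Y.
Proof.
apply/matrixP => i j; rewrite !mxE -big_split; apply: eq_bigr => k _.
by rewrite -big_split; apply: eq_bigr => l _; rewrite mxE mulrDr.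
Qed.

Lemma RbarN Rm X : Rbar Rm (- X) = - Rbar Rm X.
Proof. by rewrite -scaleN1r RbarZ scaleN1r. Qed.

End G.

Section F.
Variable R : realType.
Implicit Types (X Y : 'M[R]_4) (Rm : tensor4 R) (e : 'I_4 -> 'I_4 -> R).

Definition Emx e : 'M[R]_4 := \matrix_(i, j) e i j.
Definition O4 e p q : 'M[R]_4 := \matrix_(i, j) (e p i * e q j).

Lemma frame_mx e : orthonormal_frame e -> Emx e *m (Emx e)^T = 1%:M.
Proof.
move=> h; apply/matrixP => i j; rewrite !mxE -h /vdot.
by apply: eq_bigr => k _; rewrite !mxE.
Qed.

Lemma EfE e (f : 'M[R]_4) :
  (Emx e)^T *m f *m Emx e = \sum_p \sum_q f p q *: O4 e p q.
Proof.
apply/matrixP => i j; rewrite !mxE summxE.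
transitivity (\sum_k \sum_p e p i * f p k * e k j).
  by apply: eq_bigr => k _; rewrite !mxE mulr_suml; apply: eq_bigr => p _; rewrite !mxE.
rewrite exchange_big /=; apply: eq_bigr => p _; rewrite summxE.
by apply: eq_bigr => q _; rewrite !mxE; ring.
Qed.

Lemma BfO Rm e p q r s :
  mdot (O4 e p q) (Rbar Rm (O4 e r s)) = Reval Rm (e p) (e r) (e s) (e q).
Proof.
rewrite /mdot /Reval; apply: eq_bigr => i _.
transitivity (\sum_j \sum_k \sum_l Rm i k l j * e p i * e r k * e s l * e q j).
  apply: eq_bigr => j _; rewrite !mxE mulr_sumr; apply: eq_bigr => k _.
  by rewrite mulr_sumr; apply: eq_bigr => l _; rewrite !mxE; ring.
rewrite exchange_big /=; apply: eq_bigr => k _.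
by rewrite exchange_big.
Qed.

Lemma mdot_sum2l (g : 'I_4 -> 'I_4 -> R) (Z : 'I_4 -> 'I_4 -> 'M[R]_4) W :
  mdot (\sum_p \sum_q g p q *: Z p q) W = \sum_p \sum_q g p q * mdot (Z p q) W.
Proof.
rewrite mdot_suml; apply: eq_bigr => p _.
by rewrite mdot_suml; apply: eq_bigr => q _; rewrite mdotZl.
Qed.

Lemma Rbar_sum2 Rm (g : 'I_4 -> 'I_4 -> R) (Z : 'I_4 -> 'I_4 -> 'M[R]_4) :
  Rbar Rm (\sum_p \sum_q g p q *: Z p q) = \sum_p \sum_q g p q *: Rbar Rm (Z p q).
Proof.
rewrite Rbar_sum; apply: eq_bigr => p _.
by rewrite Rbar_sum; apply: eq_bigr => q _; rewrite RbarZ.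
Qed.

Lemma qf_frame Rm e (f : 'M[R]_4) (F := (Emx e)^T *m f *m Emx e) :
  mdot F (Rbar Rm F) =
  \sum_p \sum_q f p q * \sum_r \sum_s f r s * Reval Rm (e p) (e r) (e s) (e q).
Proof.
rewrite /F EfE mdot_sum2l; apply: eq_bigr => p _; apply: eq_bigr => q _.
congr (_ * _); rewrite Rbar_sum2 mdotC mdot_sum2l.
by apply: eq_bigr => r _; apply: eq_bigr => s _; rewrite mdotC BfO.
Qed.

End F.

Section S.
Variable R : realType.
Implicit Types (Rm : tensor4 R) (x y z w : 'I_4 -> R).

Lemma swap12 (G : 'I_4 -> 'I_4 -> 'I_4 -> 'I_4 -> R) :
  \sum_a \sum_b \sum_c \sum_d G a b c d = \sum_b \sum_a \sum_c \sum_d G a b c d.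
Proof. exact: exchange_big. Qed.

Lemma swap23 (G : 'I_4 -> 'I_4 -> 'I_4 -> 'I_4 -> R) :
  \sum_a \sum_b \sum_c \sum_d G a b c d = \sum_a \sum_c \sum_b \sum_d G a b c d.
Proof. by apply: eq_bigr => a _; exact: exchange_big. Qed.

Lemma swap34 (G : 'I_4 -> 'I_4 -> 'I_4 -> 'I_4 -> R) :
  \sum_a \sum_b \sum_c \sum_d G a b c d = \sum_a \sum_b \sum_d \sum_c G a b c d.
Proof.
by apply: eq_bigr => a _; apply: eq_bigr => b _; exact: exchange_big.
Qed.

Lemma eq_big4 (G H : 'I_4 -> 'I_4 -> 'I_4 -> 'I_4 -> R) :
  (forall a b c d, G a b c d = H a b c d) ->
  \sum_a \sum_b \sum_c \sum_d G a b c d = \sum_a \sum_b \sum_c \sum_d H a b c d.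
Proof.
move=> h; apply: eq_bigr => a _; apply: eq_bigr => b _; apply: eq_bigr => c _.
by apply: eq_bigr => d _.
Qed.

Lemma RevA Rm x y z w : is_alg_curv Rm ->
  Reval Rm x y z w = - Reval Rm y x z w.
Proof.
case=> hA hB hP hBi; rewrite /Reval [in RHS]swap12.
rewrite -!sumrN; apply: eq_bigr => a _; rewrite -sumrN; apply: eq_bigr => b _.
rewrite -sumrN; apply: eq_bigr => c _; rewrite -sumrN; apply: eq_bigr => d _.
rewrite (hA a b c d); ring.
Qed.

Lemma RevB Rm x y z w : is_alg_curv Rm ->
  Reval Rm x y z w = - Reval Rm x y w z.
Proof.
case=> hA hB hP hBi; rewrite /Reval [in RHS]swap34.
rewrite -!sumrN; apply: eq_bigr => a _; rewrite -sumrN; apply: eq_bigr => b _.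
rewrite -sumrN; apply: eq_bigr => c _; rewrite -sumrN; apply: eq_bigr => d _.
rewrite (hB a b c d); ring.
Qed.

Lemma RevP Rm x y z w : is_alg_curv Rm ->
  Reval Rm x y z w = Reval Rm z w x y.
Proof.
case=> hA hB hP hBi; rewrite /Reval [in RHS]swap23 [in RHS]swap12 [in RHS]swap34.
rewrite [in RHS]swap23.
apply: eq_big4 => a b c d; rewrite (hP a b c d); ring.
Qed.

Lemma RevBi Rm x y z w : is_alg_curv Rm ->
  Reval Rm x y z w + Reval Rm y z x w + Reval Rm z x y w = 0.
Proof.
case=> hA hB hP hBi; rewrite /Reval.
rewrite [X in _ + X + _]swap23 [X in _ + X + _]swap12.
rewrite [X in _ + _ + X]swap12 [X in _ + _ + X]swap23.
rewrite -!big_split /= big1 // => a _; rewrite -!big_split /= big1 // => b _.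
rewrite -!big_split /= big1 // => c _; rewrite -!big_split /= big1 // => d _.
rewrite -[RHS](mul0r (x a * y b * z c * w d)) -(hBi a b c d); ring.
Qed.

End S.

Section C.
Variable R : realType.

Definition o0 : 'I_4 := @Ordinal 4 0 isT.
Definition o1 : 'I_4 := @Ordinal 4 1 isT.
Definition o2 : 'I_4 := @Ordinal 4 2 isT.
Definition o3 : 'I_4 := @Ordinal 4 3 isT.

Lemma sum4 (F : 'I_4 -> R) : \sum_i F i = F o0 + F o1 + F o2 + F o3.
Proof.
by rewrite !big_ord_recl big_ord0 addr0 !addrA; congr (_ + _ + _ + _); congr F; apply: val_inj.
Qed.

Lemma sum9 (F : 'I_9 -> R) : \sum_i F i =
  F (@Ordinal 9 0 isT) + F (@Ordinal 9 1 isT) + F (@Ordinal 9 2 isT) +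
  F (@Ordinal 9 3 isT) + F (@Ordinal 9 4 isT) + F (@Ordinal 9 5 isT) +
  F (@Ordinal 9 6 isT) + F (@Ordinal 9 7 isT) + F (@Ordinal 9 8 isT).
Proof.
rewrite !big_ord_recl big_ord0 addr0 !addrA.
by congr (_ + _ + _ + _ + _ + _ + _ + _ + _); congr F; apply: val_inj.
Qed.

Definition h2 : R := 2^-1.
Definition fv (i p q : nat) : R :=
  match i, p, q with
  | 0, 0, 2 => h2
  | 0, 2, 0 => h2
  | 0, 1, 3 => h2
  | 0, 3, 1 => h2
  | 1, 0, 2 => h2
  | 1, 2, 0 => h2
  | 1, 1, 3 => - h2
  | 1, 3, 1 => - h2
  | 2, 0, 3 => h2
  | 2, 3, 0 => h2
  | 2, 1, 2 => h2
  | 2, 2, 1 => h2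
  | 3, 0, 3 => h2
  | 3, 3, 0 => h2
  | 3, 1, 2 => - h2
  | 3, 2, 1 => - h2
  | 4, 0, 1 => h2
  | 4, 1, 0 => h2
  | 4, 2, 3 => h2
  | 4, 3, 2 => h2
  | 5, 0, 1 => h2
  | 5, 1, 0 => h2
  | 5, 2, 3 => - h2
  | 5, 3, 2 => - h2
  | 6, 0, 0 => h2
  | 6, 1, 1 => h2
  | 6, 2, 2 => - h2
  | 6, 3, 3 => - h2
  | 7, 0, 0 => h2
  | 7, 1, 1 => - h2
  | 7, 2, 2 => h2
  | 7, 3, 3 => - h2
  | 8, 0, 0 => h2
  | 8, 1, 1 => - h2
  | 8, 2, 2 => - h2
  | 8, 3, 3 => h2
  | _, _, _ => 0
  end.

Definition fm (i : nat) : 'M[R]_4 := \matrix_(p, q) fv i p q.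

Lemma fm_orth (i j : 'I_9) : mdot (fm i) (fm j) = (i == j)%:R.
Proof.
rewrite /mdot !sum4 !mxE /h2.
case: i => [[|[|[|[|[|[|[|[|[|//]]]]]]]]] ?];
case: j => [[|[|[|[|[|[|[|[|[|//]]]]]]]]] ?] /=; rewrite /h2; lra.
Qed.

Lemma ord4 (k : 'I_4) : k = o0 \/ k = o1 \/ k = o2 \/ k = o3.
Proof.
case: k => [[|[|[|[|//]]]] h].
- by left; apply: val_inj.
- by right; left; apply: val_inj.
- by right; right; left; apply: val_inj.
- by right; right; right; apply: val_inj.
Qed.

Lemma fm_sym (i : 'I_9) : (fm i)^T = fm i.
Proof.
apply/matrixP => p q; rewrite !mxE.
have [->|[->|[->|->]]] := ord4 p; have [->|[->|[->|->]]] := ord4 q;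
case: i => [[|[|[|[|[|[|[|[|[|//]]]]]]]]] ?] //.
Qed.

Lemma fm_tr (i : 'I_9) : \tr (fm i) = 0.
Proof.
rewrite /mxtrace sum4 !mxE.
case: i => [[|[|[|[|[|[|[|[|[|//]]]]]]]]] ?] /=; rewrite /h2; lra.
Qed.

Lemma fm_complete (Y : 'M[R]_4) : Y^T = Y -> \tr Y = 0 ->
  Y = \sum_(i < 9) mdot (fm i) Y *: fm i.
Proof.
move=> hs; rewrite /mxtrace sum4 => ht.
have s p q : Y q p = Y p q by rewrite -{1}hs mxE.
have s01 := s o0 o1; have s02 := s o0 o2; have s03 := s o0 o3.
have s12 := s o1 o2; have s13 := s o1 o3; have s23 := s o2 o3.
apply/matrixP => k l; rewrite summxE sum9 /mdot !sum4 !mxE /=.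
have [->|[->|[->|->]]] := ord4 k; have [->|[->|[->|->]]] := ord4 l;
rewrite /= /h2; lra.
Qed.

End C.

Section M.
Variable R : realType.
Implicit Types (X Y : 'M[R]_4) (Rm : tensor4 R) (e : 'I_4 -> 'I_4 -> R).

Lemma mdot_conj (E f g : 'M[R]_4) : E *m E^T = 1%:M ->
  mdot (E^T *m f *m E) (E^T *m g *m E) = mdot f g.
Proof.
move=> hE; rewrite !mdotE !trmx_mul trmxK !mulmxA.
rewrite -[E^T *m f *m E *m E^T]mulmxA hE mulmx1.
rewrite mxtrace_mulC !mulmxA hE mul1mx //.
Qed.

Definition Fe e (i : 'I_9) : 'M[R]_4 := (Emx e)^T *m fm R i *m Emx e.

Lemma Fe_orth e i j : orthonormal_frame e -> mdot (Fe e i) (Fe e j) = (i == j)%:R.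
Proof. by move=> h; rewrite /Fe mdot_conj ?frame_mx // fm_orth. Qed.

Lemma Fe_sym e i : (Fe e i)^T = Fe e i.
Proof. by rewrite /Fe !trmx_mul trmxK fm_sym mulmxA. Qed.

Lemma Fe_tr e i : orthonormal_frame e -> \tr (Fe e i) = 0.
Proof.
move=> h; rewrite /Fe mxtrace_mulC mulmxA (frame_mx h) mul1mx. 
exact: fm_tr.
Qed.

Lemma Fe_complete e X : orthonormal_frame e -> X^T = X -> \tr X = 0 ->
  X = \sum_(i < 9) mdot (Fe e i) X *: Fe e i.
Proof.
move=> h hs ht.
set E := Emx e.
have hE : E *m E^T = 1%:M := frame_mx h.
have hE' : E^T *m E = 1%:M := mulmx1C hE.
set Y := E *m X *m E^T.
have XE : X = E^T *m Y *m E by rewrite /Y !mulmxA hE' mul1mx -mulmxA hE' mulmx1.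
have Ys : Y^T = Y by rewrite /Y !trmx_mul trmxK hs mulmxA.
have Yt : \tr Y = 0 by rewrite /Y mxtrace_mulC mulmxA hE' mul1mx.
have -> : \sum_(i < 9) mdot (Fe e i) X *: Fe e i =
          E^T *m (\sum_(i < 9) mdot (fm R i) Y *: fm R i) *m E.
  rewrite mulmx_sumr mulmx_suml; apply: eq_bigr => i _.
  by rewrite /Fe -/E {1}XE mdot_conj // -scalemxAr -scalemxAl.
by rewrite -fm_complete.
Qed.

Section WithB.
Variables (Rm : tensor4 R) (b : 'I_9 -> 'M[R]_4) (e : 'I_4 -> 'I_4 -> R).
Hypotheses (hR : is_alg_curv Rm) (hb : is_onb_S20 b) (he : orthonormal_frame e).

Definition Mx : 'M[R]_9 := \matrix_(i, a) mdot (Fe e i) (b a).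

Lemma MtM : Mx^T *m Mx = 1%:M.
Proof.
case: hb => bs bt bo.
apply/matrixP => a c; rewrite !mxE -bo.
rewrite [in RHS](Fe_complete he (bs a) (bt a)) mdot_suml.
by apply: eq_bigr => i _; rewrite !mxE mdotZl.
Qed.

Lemma MMt : Mx *m Mx^T = 1%:M.
Proof. exact: mulmx1C MtM. Qed.

Lemma Fe_b i : Fe e i = \sum_a Mx i a *: b a.
Proof.
case: hb => bs bt bo.
set G := Fe e i - \sum_a Mx i a *: b a.
have Gs : G^T = G.
  rewrite /G linearB /= Fe_sym raddf_sum; congr (_ - _); apply: eq_bigr => a _.
  by rewrite /= -[X in _ = _ *: X]bs; apply/matrixP => p q; rewrite !mxE.
have Gt : \tr G = 0.
  have h1 : \tr (\sum_a Mx i a *: b a) = 0.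
    rewrite (@raddf_sum _ _ (@mxtrace R 4)); apply: big1 => a _.
    by rewrite -[LHS]/(\tr (Mx i a *: b a)) mxtraceZ bt mulr0.
  by rewrite /G mxtraceD -scaleN1r mxtraceZ h1 Fe_tr // mulr0 addr0.
have Gc : forall j, mdot (Fe e j) G = 0.
  move=> j; rewrite /G mdotDr [mdot (Fe e j) (- _)]mdotC mdotNl mdot_suml Fe_orth //.
  have := congr1 (fun m : 'M[R]_9 => m j i) MMt; rewrite !mxE => <-.
  apply/eqP; rewrite subr_eq0; apply/eqP; apply: eq_bigr => a _.
  by rewrite mdotZl !mxE mdotC mulrC.
apply/eqP; rewrite -subr_eq0 -/G; apply/eqP.
rewrite (Fe_complete he Gs Gt) big1 // => j _.
by rewrite Gc scale0r.
Qed.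

Lemma curv2E a c : curv2_mx Rm b a c = mdot (b a) (Rbar Rm (b c)).
Proof.
case: hb => bs bt bo.
by rewrite mxE /proj0 mdotDr -scaleN1r mdotZr mdotZr mdot1 bt !mulr0 addr0.
Qed.

Lemma Bsym X Y : mdot X (Rbar Rm Y) = mdot Y (Rbar Rm X).
Proof.
case: hR => hA hB hP hBi.
transitivity (\sum_i \sum_j \sum_k \sum_l X i j * (Rm i k l j * Y k l)).
  apply: eq_bigr => i _; apply: eq_bigr => j _; rewrite mxE mulr_sumr.
  by apply: eq_bigr => k _; rewrite mulr_sumr.
transitivity (\sum_i \sum_j \sum_k \sum_l Y i j * (Rm i k l j * X k l)); last first.
  apply: esym; apply: eq_bigr => i _; apply: eq_bigr => j _; rewrite mxE mulr_sumr.
  by apply: eq_bigr => k _; rewrite mulr_sumr.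
rewrite [in RHS]swap23 [in RHS]swap12 [in RHS]swap34 [in RHS]swap23.
apply: eq_big4 => i j k l; rewrite (hA k i j l) (hB i k j l); ring.
Qed.

Lemma curv2_sym : (curv2_mx Rm b)^T = curv2_mx Rm b.
Proof. by apply/matrixP => a c; rewrite mxE !curv2E Bsym. Qed.

Lemma diag_qf i :
  (Mx *m curv2_mx Rm b *m Mx^T) i i = mdot (Fe e i) (Rbar Rm (Fe e i)).
Proof.
rewrite (Fe_b i) mdot_suml Rbar_sum mxE.
transitivity (\sum_c \sum_a Mx i a * Mx i c * mdot (b a) (Rbar Rm (b c))).
  apply: eq_bigr => c _; rewrite !mxE mulr_suml; apply: eq_bigr => a _.
  by rewrite curv2E; ring.
rewrite exchange_big /=; apply: eq_bigr => a _.
rewrite mdotZl mdot_sumr mulr_sumr; apply: eq_bigr => c _.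
by rewrite RbarZ mdotZr; ring.
Qed.

Lemma tr_qf : \tr (curv2_mx Rm b) = \sum_i mdot (Fe e i) (Rbar Rm (Fe e i)).
Proof.
rewrite -[curv2_mx Rm b]mul1mx -MtM -mulmxA mxtrace_mulC.
by rewrite /mxtrace; apply: eq_bigr => i _; rewrite diag_qf.
Qed.

End WithB.
End M.

Section Q.
Variable R : realType.
Variables (Rm : tensor4 R) (e : 'I_4 -> 'I_4 -> R).
Hypothesis hR : is_alg_curv Rm.

Lemma q0E : mdot (Fe e (@Ordinal 9 0 isT)) (Rbar Rm (Fe e (@Ordinal 9 0 isT))) =
  - (1%:R / 1%:R) * Reval Rm (e o0) (e o1) (e o2) (e o3) + (1%:R / 2%:R) * Reval Rm (e o0) (e o2) (e o0) (e o2) + (1%:R / 1%:R) * Reval Rm (e o0) (e o3) (e o1) (e o2) + (1%:R / 2%:R) * Reval Rm (e o1) (e o3) (e o1) (e o3).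
Proof.
rewrite /Fe qf_frame !sum4 !mxE /= /h2.
have := RevA (e o0) (e o0) (e o2) (e o2) hR.
have := RevA (e o1) (e o0) (e o2) (e o3) hR.
have := RevA (e o1) (e o1) (e o3) (e o3) hR.
have := RevA (e o2) (e o0) (e o2) (e o0) hR.
have := RevA (e o2) (e o1) (e o3) (e o0) hR.
have := RevA (e o2) (e o2) (e o0) (e o0) hR.
have := RevA (e o3) (e o0) (e o2) (e o1) hR.
have := RevA (e o3) (e o1) (e o3) (e o1) hR.
have := RevA (e o3) (e o2) (e o0) (e o1) hR.
have := RevA (e o3) (e o3) (e o1) (e o1) hR.
have := RevB (e o0) (e o1) (e o3) (e o2) hR.
have := RevB (e o0) (e o2) (e o2) (e o0) hR.
have := RevB (e o0) (e o3) (e o2) (e o1) hR.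
have := RevB (e o1) (e o2) (e o3) (e o0) hR.
have := RevB (e o1) (e o3) (e o3) (e o1) hR.
have := RevB (e o2) (e o3) (e o1) (e o0) hR.
have := RevP (e o1) (e o2) (e o0) (e o3) hR.
have := RevP (e o2) (e o3) (e o0) (e o1) hR.
lra.
Qed.

Lemma q1E : mdot (Fe e (@Ordinal 9 1 isT)) (Rbar Rm (Fe e (@Ordinal 9 1 isT))) =
  (1%:R / 1%:R) * Reval Rm (e o0) (e o1) (e o2) (e o3) + (1%:R / 2%:R) * Reval Rm (e o0) (e o2) (e o0) (e o2) + - (1%:R / 1%:R) * Reval Rm (e o0) (e o3) (e o1) (e o2) + (1%:R / 2%:R) * Reval Rm (e o1) (e o3) (e o1) (e o3).
Proof.
rewrite /Fe qf_frame !sum4 !mxE /= /h2.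
have := RevA (e o0) (e o0) (e o2) (e o2) hR.
have := RevA (e o1) (e o0) (e o2) (e o3) hR.
have := RevA (e o1) (e o1) (e o3) (e o3) hR.
have := RevA (e o2) (e o0) (e o2) (e o0) hR.
have := RevA (e o2) (e o1) (e o3) (e o0) hR.
have := RevA (e o2) (e o2) (e o0) (e o0) hR.
have := RevA (e o3) (e o0) (e o2) (e o1) hR.
have := RevA (e o3) (e o1) (e o3) (e o1) hR.
have := RevA (e o3) (e o2) (e o0) (e o1) hR.
have := RevA (e o3) (e o3) (e o1) (e o1) hR.
have := RevB (e o0) (e o1) (e o3) (e o2) hR.
have := RevB (e o0) (e o2) (e o2) (e o0) hR.
have := RevB (e o0) (e o3) (e o2) (e o1) hR.
have := RevB (e o1) (e o2) (e o3) (e o0) hR.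
have := RevB (e o1) (e o3) (e o3) (e o1) hR.
have := RevB (e o2) (e o3) (e o1) (e o0) hR.
have := RevP (e o1) (e o2) (e o0) (e o3) hR.
have := RevP (e o2) (e o3) (e o0) (e o1) hR.
lra.
Qed.

Lemma q2E : mdot (Fe e (@Ordinal 9 2 isT)) (Rbar Rm (Fe e (@Ordinal 9 2 isT))) =
  (1%:R / 1%:R) * Reval Rm (e o0) (e o1) (e o2) (e o3) + (1%:R / 1%:R) * Reval Rm (e o0) (e o2) (e o1) (e o3) + (1%:R / 2%:R) * Reval Rm (e o0) (e o3) (e o0) (e o3) + (1%:R / 2%:R) * Reval Rm (e o1) (e o2) (e o1) (e o2).
Proof.
rewrite /Fe qf_frame !sum4 !mxE /= /h2.
have := RevA (e o0) (e o0) (e o3) (e o3) hR.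
have := RevA (e o1) (e o0) (e o3) (e o2) hR.
have := RevA (e o1) (e o1) (e o2) (e o2) hR.
have := RevA (e o2) (e o0) (e o3) (e o1) hR.
have := RevA (e o2) (e o1) (e o2) (e o1) hR.
have := RevA (e o2) (e o2) (e o1) (e o1) hR.
have := RevA (e o3) (e o0) (e o3) (e o0) hR.
have := RevA (e o3) (e o1) (e o2) (e o0) hR.
have := RevA (e o3) (e o2) (e o1) (e o0) hR.
have := RevA (e o3) (e o3) (e o0) (e o0) hR.
have := RevB (e o0) (e o1) (e o3) (e o2) hR.
have := RevB (e o0) (e o2) (e o3) (e o1) hR.
have := RevB (e o0) (e o3) (e o3) (e o0) hR.
have := RevB (e o1) (e o2) (e o2) (e o1) hR.
have := RevB (e o1) (e o3) (e o2) (e o0) hR.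
have := RevB (e o2) (e o3) (e o1) (e o0) hR.
have := RevP (e o1) (e o3) (e o0) (e o2) hR.
have := RevP (e o2) (e o3) (e o0) (e o1) hR.
lra.
Qed.

Lemma q3E : mdot (Fe e (@Ordinal 9 3 isT)) (Rbar Rm (Fe e (@Ordinal 9 3 isT))) =
  - (1%:R / 1%:R) * Reval Rm (e o0) (e o1) (e o2) (e o3) + - (1%:R / 1%:R) * Reval Rm (e o0) (e o2) (e o1) (e o3) + (1%:R / 2%:R) * Reval Rm (e o0) (e o3) (e o0) (e o3) + (1%:R / 2%:R) * Reval Rm (e o1) (e o2) (e o1) (e o2).
Proof.
rewrite /Fe qf_frame !sum4 !mxE /= /h2.
have := RevA (e o0) (e o0) (e o3) (e o3) hR.
have := RevA (e o1) (e o0) (e o3) (e o2) hR.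
have := RevA (e o1) (e o1) (e o2) (e o2) hR.
have := RevA (e o2) (e o0) (e o3) (e o1) hR.
have := RevA (e o2) (e o1) (e o2) (e o1) hR.
have := RevA (e o2) (e o2) (e o1) (e o1) hR.
have := RevA (e o3) (e o0) (e o3) (e o0) hR.
have := RevA (e o3) (e o1) (e o2) (e o0) hR.
have := RevA (e o3) (e o2) (e o1) (e o0) hR.
have := RevA (e o3) (e o3) (e o0) (e o0) hR.
have := RevB (e o0) (e o1) (e o3) (e o2) hR.
have := RevB (e o0) (e o2) (e o3) (e o1) hR.
have := RevB (e o0) (e o3) (e o3) (e o0) hR.
have := RevB (e o1) (e o2) (e o2) (e o1) hR.
have := RevB (e o1) (e o3) (e o2) (e o0) hR.
have := RevB (e o2) (e o3) (e o1) (e o0) hR.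
have := RevP (e o1) (e o3) (e o0) (e o2) hR.
have := RevP (e o2) (e o3) (e o0) (e o1) hR.
lra.
Qed.

Lemma q4E : mdot (Fe e (@Ordinal 9 4 isT)) (Rbar Rm (Fe e (@Ordinal 9 4 isT))) =
  (1%:R / 2%:R) * Reval Rm (e o0) (e o1) (e o0) (e o1) + - (1%:R / 1%:R) * Reval Rm (e o0) (e o2) (e o1) (e o3) + - (1%:R / 1%:R) * Reval Rm (e o0) (e o3) (e o1) (e o2) + (1%:R / 2%:R) * Reval Rm (e o2) (e o3) (e o2) (e o3).
Proof.
rewrite /Fe qf_frame !sum4 !mxE /= /h2.
have := RevA (e o0) (e o0) (e o1) (e o1) hR.
have := RevA (e o1) (e o0) (e o1) (e o0) hR.
have := RevA (e o1) (e o1) (e o0) (e o0) hR.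
have := RevA (e o2) (e o0) (e o1) (e o3) hR.
have := RevA (e o2) (e o1) (e o0) (e o3) hR.
have := RevA (e o2) (e o2) (e o3) (e o3) hR.
have := RevA (e o3) (e o0) (e o1) (e o2) hR.
have := RevA (e o3) (e o1) (e o0) (e o2) hR.
have := RevA (e o3) (e o2) (e o3) (e o2) hR.
have := RevA (e o3) (e o3) (e o2) (e o2) hR.
have := RevB (e o0) (e o1) (e o1) (e o0) hR.
have := RevB (e o0) (e o2) (e o3) (e o1) hR.
have := RevB (e o0) (e o3) (e o2) (e o1) hR.
have := RevB (e o1) (e o2) (e o3) (e o0) hR.
have := RevB (e o1) (e o3) (e o2) (e o0) hR.
have := RevB (e o2) (e o3) (e o3) (e o2) hR.
have := RevP (e o1) (e o2) (e o0) (e o3) hR.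
have := RevP (e o1) (e o3) (e o0) (e o2) hR.
lra.
Qed.

Lemma q5E : mdot (Fe e (@Ordinal 9 5 isT)) (Rbar Rm (Fe e (@Ordinal 9 5 isT))) =
  (1%:R / 2%:R) * Reval Rm (e o0) (e o1) (e o0) (e o1) + (1%:R / 1%:R) * Reval Rm (e o0) (e o2) (e o1) (e o3) + (1%:R / 1%:R) * Reval Rm (e o0) (e o3) (e o1) (e o2) + (1%:R / 2%:R) * Reval Rm (e o2) (e o3) (e o2) (e o3).
Proof.
rewrite /Fe qf_frame !sum4 !mxE /= /h2.
have := RevA (e o0) (e o0) (e o1) (e o1) hR.
have := RevA (e o1) (e o0) (e o1) (e o0) hR.
have := RevA (e o1) (e o1) (e o0) (e o0) hR.
have := RevA (e o2) (e o0) (e o1) (e o3) hR.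
have := RevA (e o2) (e o1) (e o0) (e o3) hR.
have := RevA (e o2) (e o2) (e o3) (e o3) hR.
have := RevA (e o3) (e o0) (e o1) (e o2) hR.
have := RevA (e o3) (e o1) (e o0) (e o2) hR.
have := RevA (e o3) (e o2) (e o3) (e o2) hR.
have := RevA (e o3) (e o3) (e o2) (e o2) hR.
have := RevB (e o0) (e o1) (e o1) (e o0) hR.
have := RevB (e o0) (e o2) (e o3) (e o1) hR.
have := RevB (e o0) (e o3) (e o2) (e o1) hR.
have := RevB (e o1) (e o2) (e o3) (e o0) hR.
have := RevB (e o1) (e o3) (e o2) (e o0) hR.
have := RevB (e o2) (e o3) (e o3) (e o2) hR.
have := RevP (e o1) (e o2) (e o0) (e o3) hR.
have := RevP (e o1) (e o3) (e o0) (e o2) hR.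
lra.
Qed.

Lemma q6E : mdot (Fe e (@Ordinal 9 6 isT)) (Rbar Rm (Fe e (@Ordinal 9 6 isT))) =
  - (1%:R / 2%:R) * Reval Rm (e o0) (e o1) (e o0) (e o1) + (1%:R / 2%:R) * Reval Rm (e o0) (e o2) (e o0) (e o2) + (1%:R / 2%:R) * Reval Rm (e o0) (e o3) (e o0) (e o3) + (1%:R / 2%:R) * Reval Rm (e o1) (e o2) (e o1) (e o2) + (1%:R / 2%:R) * Reval Rm (e o1) (e o3) (e o1) (e o3) + - (1%:R / 2%:R) * Reval Rm (e o2) (e o3) (e o2) (e o3).
Proof.
rewrite /Fe qf_frame !sum4 !mxE /= /h2.
have := RevA (e o0) (e o0) (e o0) (e o0) hR.
have := RevA (e o1) (e o0) (e o0) (e o1) hR.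
have := RevA (e o1) (e o1) (e o1) (e o1) hR.
have := RevA (e o2) (e o0) (e o0) (e o2) hR.
have := RevA (e o2) (e o1) (e o1) (e o2) hR.
have := RevA (e o2) (e o2) (e o2) (e o2) hR.
have := RevA (e o3) (e o0) (e o0) (e o3) hR.
have := RevA (e o3) (e o1) (e o1) (e o3) hR.
have := RevA (e o3) (e o2) (e o2) (e o3) hR.
have := RevA (e o3) (e o3) (e o3) (e o3) hR.
have := RevB (e o0) (e o1) (e o1) (e o0) hR.
have := RevB (e o0) (e o2) (e o2) (e o0) hR.
have := RevB (e o0) (e o3) (e o3) (e o0) hR.
have := RevB (e o1) (e o2) (e o2) (e o1) hR.
have := RevB (e o1) (e o3) (e o3) (e o1) hR.
have := RevB (e o2) (e o3) (e o3) (e o2) hR.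
lra.
Qed.

Lemma q7E : mdot (Fe e (@Ordinal 9 7 isT)) (Rbar Rm (Fe e (@Ordinal 9 7 isT))) =
  (1%:R / 2%:R) * Reval Rm (e o0) (e o1) (e o0) (e o1) + - (1%:R / 2%:R) * Reval Rm (e o0) (e o2) (e o0) (e o2) + (1%:R / 2%:R) * Reval Rm (e o0) (e o3) (e o0) (e o3) + (1%:R / 2%:R) * Reval Rm (e o1) (e o2) (e o1) (e o2) + - (1%:R / 2%:R) * Reval Rm (e o1) (e o3) (e o1) (e o3) + (1%:R / 2%:R) * Reval Rm (e o2) (e o3) (e o2) (e o3).
Proof.
rewrite /Fe qf_frame !sum4 !mxE /= /h2.
have := RevA (e o0) (e o0) (e o0) (e o0) hR.
have := RevA (e o1) (e o0) (e o0) (e o1) hR.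
have := RevA (e o1) (e o1) (e o1) (e o1) hR.
have := RevA (e o2) (e o0) (e o0) (e o2) hR.
have := RevA (e o2) (e o1) (e o1) (e o2) hR.
have := RevA (e o2) (e o2) (e o2) (e o2) hR.
have := RevA (e o3) (e o0) (e o0) (e o3) hR.
have := RevA (e o3) (e o1) (e o1) (e o3) hR.
have := RevA (e o3) (e o2) (e o2) (e o3) hR.
have := RevA (e o3) (e o3) (e o3) (e o3) hR.
have := RevB (e o0) (e o1) (e o1) (e o0) hR.
have := RevB (e o0) (e o2) (e o2) (e o0) hR.
have := RevB (e o0) (e o3) (e o3) (e o0) hR.
have := RevB (e o1) (e o2) (e o2) (e o1) hR.
have := RevB (e o1) (e o3) (e o3) (e o1) hR.
have := RevB (e o2) (e o3) (e o3) (e o2) hR.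
lra.
Qed.

Lemma q8E : mdot (Fe e (@Ordinal 9 8 isT)) (Rbar Rm (Fe e (@Ordinal 9 8 isT))) =
  (1%:R / 2%:R) * Reval Rm (e o0) (e o1) (e o0) (e o1) + (1%:R / 2%:R) * Reval Rm (e o0) (e o2) (e o0) (e o2) + - (1%:R / 2%:R) * Reval Rm (e o0) (e o3) (e o0) (e o3) + - (1%:R / 2%:R) * Reval Rm (e o1) (e o2) (e o1) (e o2) + (1%:R / 2%:R) * Reval Rm (e o1) (e o3) (e o1) (e o3) + (1%:R / 2%:R) * Reval Rm (e o2) (e o3) (e o2) (e o3).
Proof.
rewrite /Fe qf_frame !sum4 !mxE /= /h2.
have := RevA (e o0) (e o0) (e o0) (e o0) hR.
have := RevA (e o1) (e o0) (e o0) (e o1) hR.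
have := RevA (e o1) (e o1) (e o1) (e o1) hR.
have := RevA (e o2) (e o0) (e o0) (e o2) hR.
have := RevA (e o2) (e o1) (e o1) (e o2) hR.
have := RevA (e o2) (e o2) (e o2) (e o2) hR.
have := RevA (e o3) (e o0) (e o0) (e o3) hR.
have := RevA (e o3) (e o1) (e o1) (e o3) hR.
have := RevA (e o3) (e o2) (e o2) (e o3) hR.
have := RevA (e o3) (e o3) (e o3) (e o3) hR.
have := RevB (e o0) (e o1) (e o1) (e o0) hR.
have := RevB (e o0) (e o2) (e o2) (e o0) hR.
have := RevB (e o0) (e o3) (e o3) (e o0) hR.
have := RevB (e o1) (e o2) (e o2) (e o1) hR.
have := RevB (e o1) (e o3) (e o3) (e o1) hR.
have := RevB (e o2) (e o3) (e o3) (e o2) hR.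
lra.
Qed.
End Q.

Section Fin.
Variable R : realType.
Variables (Rm : tensor4 R) (b : 'I_9 -> 'M[R]_4) (e : 'I_4 -> 'I_4 -> R).
Hypotheses (hR : is_alg_curv Rm) (hb : is_onb_S20 b) (he : orthonormal_frame e).

Local Notation q i := (mdot (Fe e i) (Rbar Rm (Fe e i))).

Lemma key_id : 3 * (q (@Ordinal 9 0 isT) + q (@Ordinal 9 3 isT) + q (@Ordinal 9 6 isT))
  + \sum_i q i = 9 / 2 * iso_curv Rm e.
Proof.
rewrite sum9 !q0E // !q1E // !q2E // !q3E // !q4E // !q5E // !q6E // !q7E // !q8E //.
have i0 : inord 0 = o0 by apply: val_inj; rewrite /= inordK.
have i1 : inord 1 = o1 by apply: val_inj; rewrite /= inordK.
have i2 : inord 2 = o2 by apply: val_inj; rewrite /= inordK.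
have i3 : inord 3 = o3 by apply: val_inj; rewrite /= inordK.
rewrite /iso_curv /= i0 i1 i2 i3.
have := RevBi (e o0) (e o1) (e o2) (e o3) hR.
have := RevP (e o1) (e o2) (e o0) (e o3) hR.
have := RevA (e o2) (e o0) (e o1) (e o3) hR.
lra.
Qed.

Lemma main_ineq (B : 'M[R]_9) lam al th delta (w : 'I_9 -> R) :
  B^T = B -> B = curv2_mx Rm b - delta%:M -> eigenvalues_of B lam ->
  - th * ((\sum_(x <- lam) x) / 9%:R) <= al^-1 * psum lam al ->
  (forall i, 0 <= w i <= 1) -> \sum_i w i = al -> 1 <= al -> al < 9 ->
  al * (1 + th) * delta <= \sum_i w i * q i + (al * th / 9) * \sum_i q i.
Proof.
move=> BT BE eig cone hw sw a1 a9.
have [h1 h2] := KF BT eig (MMt hb he) hw sw a1 a9.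
have dE : forall i, (Mx b e *m B *m (Mx b e)^T) i i = q i - delta.
  move=> i; rewrite BE mulmxBr mulmxBl mul_mx_scalar -scalemxAl (MMt hb he).
  by rewrite mxE (diag_qf Rm hb he) !mxE eqxx mulr1n mulr1.
have trB : \tr B = \sum_i q i - 9%:R * delta.
  rewrite BE mxtraceD -scaleN1r mxtraceZ mxtrace_scalar (tr_qf Rm hb he).
  rewrite -mulr_natl; lra.
rewrite h2 trB in cone.
have {}h1 : psum lam al <= \sum_i w i * q i - al * delta.
  suff <- : \sum_i w i * (Mx b e *m B *m (Mx b e)^T) i i = \sum_i w i * q i - al * delta by [].
  rewrite -sw mulr_suml -sumrB; apply: eq_bigr => i _.
  by rewrite dE mulrBr.
have al0 : 0 < al by lra.
have := cone; rewrite -(ler_pM2l al0) mulVKf ?gt_eqF // => c2.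
lra.
Qed.

Lemma final (B : 'M[R]_9) lam al th delta :
  B^T = B -> B = curv2_mx Rm b - delta%:M -> eigenvalues_of B lam ->
  - th * ((\sum_(x <- lam) x) / 9%:R) <= al^-1 * psum lam al ->
  ((1 <= al <= 3) /\ th = 1) \/ ((3 <= al < 9) /\ th = 9 / al - 2) ->
  4 * delta <= iso_curv Rm e.
Proof.
move=> BT BE eig cone hc.
have K := key_id; rewrite sum9 in K.
have K2 := congr1 (fun x => al * x) K; rewrite /= in K2.
case: hc => [[/andP[a1 a3] thE]|[/andP[a3 a9] thE]].
- pose w (i : 'I_9) := if (i : nat) \in [:: 0; 3; 6]%N then al / 3 else 0.
  have hw : forall i, 0 <= w i <= 1.
    by move=> i; rewrite /w; case: ifP => _; apply/andP; split; lra.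
  have sw : \sum_i w i = al by rewrite sum9 /w /=; lra.
  have a9 : al < 9 by lra.
  have := main_ineq BT BE eig cone hw sw a1 a9.
  rewrite !sum9 /w /= thE => h.
  have h3 : al * (4 * delta - iso_curv Rm e) <= 0 by lra.
  have al0 : 0 < al by lra.
  by move: h3; rewrite pmulr_rle0 // subr_le0.
- pose w (i : 'I_9) := if (i : nat) \in [:: 0; 3; 6]%N then 1 else al / 6 - 1 / 2.
  have hw : forall i, 0 <= w i <= 1.
    by move=> i; rewrite /w; case: ifP => _; apply/andP; split; lra.
  have sw : \sum_i w i = al by rewrite sum9 /w /=; lra.
  have a1 : 1 <= al by lra.
  have al0 : al != 0 by rewrite gt_eqF //; lra.
  have e1 : al * (1 + th) = 9 - al by rewrite thE; field.
  have e2 : al * th / 9 = 1 - 2 * al / 9 by rewrite thE; field.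
  have := main_ineq BT BE eig cone hw sw a1 a9.
  rewrite e1 e2 !sum9 /w /= => h.
  have h3 : (9 - al) * (4 * delta - iso_curv Rm e) <= 0 by lra.
  by move: h3; rewrite pmulr_rle0 ?subr_le0 //; lra.
Qed.

End Fin.

Theorem proposition4p2 (R : realType) (Rm : tensor4 R) (b : 'I_9 -> 'M[R]_4)
    (alpha : R) :
  is_alg_curv Rm -> is_onb_S20 b ->
  ((((1 <= alpha <= 3) /\ in_cone (curv2_mx Rm b) alpha 1)
    \/ ((3 <= alpha < 9) /\ in_cone (curv2_mx Rm b) alpha (9 / alpha - 2)))
   -> nonneg_iso_curv Rm)
  /\
  ((((1 <= alpha <= 3) /\ in_cone_interior (curv2_mx Rm b) alpha 1)
    \/ ((3 <= alpha < 9) /\ in_cone_interior (curv2_mx Rm b) alpha (9 / alpha - 2)))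
   -> pos_iso_curv Rm).
Proof.
move=> hR hb.
have symA := curv2_sym hR hb.
have z0 : curv2_mx Rm b = curv2_mx Rm b - (0 : R)%:M.
  rewrite (_ : (0 : R)%:M = 0) ?subr0 //.
  by apply/matrixP => i j; rewrite !mxE mul0rn.
split.
- move=> hc e he.
  have hc' : exists th, exists lam, [/\ eigenvalues_of (curv2_mx Rm b) lam,
      - th * ((\sum_(x <- lam) x) / 9%:R) <= alpha^-1 * psum lam alpha &
      ((1 <= alpha <= 3) /\ th = 1) \/ ((3 <= alpha < 9) /\ th = 9 / alpha - 2)].
    case: hc => [[ha [lam [eig cone]]]|[ha [lam [eig cone]]]].
    + by exists 1, lam; split => //; left.
    + by exists (9 / alpha - 2), lam; split => //; right.
  have [th [lam [eig cone hth]]] := hc'.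
  have := final hR hb he symA z0 eig cone hth.
  by rewrite mulr0.
- move=> hc e he.
  have hc' : exists th, exists2 eps : R, 0 < eps &
     [/\ forall B : 'M[R]_9, B^T = B ->
      (forall a c, `|B a c - curv2_mx Rm b a c| < eps) -> in_cone B alpha th &
      ((1 <= alpha <= 3) /\ th = 1) \/ ((3 <= alpha < 9) /\ th = 9 / alpha - 2)].
    case: hc => [[ha [eps eps0 hin]]|[ha [eps eps0 hin]]].
    + by exists 1, eps => //; split => //; left.
    + by exists (9 / alpha - 2), eps => //; split => //; right.
  have [th [eps eps0 [hin hth]]] := hc'.
  set d := eps / 2.
  have d0 : 0 < d by rewrite /d; lra.
  set B := curv2_mx Rm b - d%:M.
  have BT : B^T = B.
    by rewrite /B linearB /= symA tr_scalar_mx.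
  have hcl : forall a c, `|B a c - curv2_mx Rm b a c| < eps.
    move=> a c; rewrite /B !mxE.
    case: (a == c) => /=.
    + rewrite mulr1n addrC addKr normrN ger0_norm; [rewrite /d; lra | lra].
    + rewrite mulr0n subr0 subrr normr0 //.
  have [lam [eig cone]] := hin B BT hcl.
  have := final hR hb he BT erefl eig cone hth.
  move=> h; lra.
Qed.
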